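(* Let $Y_1,\dots,Y_k$ be real numbers and let $M=\max\{0,\max_{1\le j\le k}(Y_1+\cdots+Y_j)\}$ be the maximum of the walk with steps $Y_1,\dots,Y_k$. Let $i\in\{1,\dots,k\}$ and $c\ge1$, and let $M'$ be the maximum of the walk with steps $Y_1,\dots,Y_i,cY_{i+1},\dots,cY_k$, defined in the same way. Then $M\le M'$. *)

(* Defs.v *)
From mathcomp Require Import all_boot all_order all_algebra.
From mathcomp Require Import reals.
Set Implicit Arguments. Unset Strict Implicit. Unset Printing Implicit Defensive.
Import Order.TTheory GRing.Theory Num.Theory.
Local Open Scope ring_scope.

(* Steps are indexed 1..k: Y 1, ..., Y k (values of Y at other indices unused). *)
Definition psum {R : realType} (Y : nat -> R) (j : nat) : R :=
  \sum_(1 <= l < j.+1) Y l.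

Definition walk_max {R : realType} (k : nat) (Y : nat -> R) : R :=
  Num.max 0 (\big[Num.max/0]_(1 <= j < k.+1) psum Y j).

Definition scale_after {R : realType} (i : nat) (c : R) (Y : nat -> R) : nat -> R :=
  fun l => if (l <= i)%N then Y l else c * Y l.

(* Main.v *)
Require Import Defs.
From mathcomp Require Import all_boot all_order all_algebra.
From mathcomp Require Import reals.
From mathcomp Require Import lra.
Import Order.TTheory GRing.Theory Num.Theory.
Local Open Scope ring_scope.

Lemma le_bigmax_seq (R : realType) (r : seq nat) (F : nat -> R) x :
  x \in r -> F x <= \big[Num.max/0]_(j <- r) F j.
Proof.
elim: r => [|a r IH] //; rewrite in_cons big_cons => /orP [/eqP ->|/IH h].
  by rewrite le_max lexx.
by rewrite le_max h orbT.
Qed.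

Lemma bigmax_le_seq (R : realType) (r : seq nat) (F : nat -> R) x :
  0 <= x -> (forall j, j \in r -> F j <= x) -> \big[Num.max/0]_(j <- r) F j <= x.
Proof.
move=> h0; elim: r => [|a r IH] H; first by rewrite big_nil.
rewrite big_cons ge_max H ?mem_head //= IH // => j hj.
by apply: H; rewrite in_cons hj orbT.
Qed.

Lemma psum_split (R : realType) (Y : nat -> R) i j : (i <= j)%N ->
  psum Y j = psum Y i + \sum_(i.+1 <= l < j.+1) Y l.
Proof.
move=> hij; rewrite /psum -big_cat_nat //.
Qed.

Theorem lemmaC1 (R : realType) (k : nat) (Y : nat -> R) (i : nat) (c : R)
  (hi1 : (1 <= i)%N) (hik : (i <= k)%N) (hc : 1 <= c) :
  walk_max k Y <= walk_max k (scale_after i c Y).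
Proof.
set Z := scale_after i c Y.
have E1 : forall j, (j <= i)%N -> psum Z j = psum Y j.
  move=> j hj; rewrite /psum; apply: eq_big_nat => l /andP [_ hl].
  by rewrite /Z /scale_after (leq_trans _ hj).
have E2 : forall j, (i <= j)%N ->
    psum Z j = psum Y i + c * (psum Y j - psum Y i).
  move=> j hj; rewrite (@psum_split _ Z _ _ hj) (@psum_split _ Y _ _ hj) E1 //.
  congr (_ + _); rewrite addrC addKr mulr_sumr.
  apply: eq_big_nat => l /andP [hl _].
  by rewrite /Z /scale_after leqNgt hl.
set M' := walk_max k Z.
have M0 : 0 <= M' by rewrite /M' /walk_max le_max lexx.
have MS : forall j, (1 <= j <= k)%N -> psum Z j <= M'.
  move=> j hj; rewrite /M' /walk_max le_max; apply/orP; right.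
  by apply: le_bigmax_seq; rewrite mem_index_iota ltnS.
rewrite /walk_max ge_max M0 /=.
apply: bigmax_le_seq => // j; rewrite mem_index_iota ltnS => hj.
case: (leqP j i) => hji; first by rewrite -E1 // MS.
have hZi := MS i ltac:(by rewrite hi1 hik).
rewrite E1 // in hZi.
have hZj := MS j hj.
rewrite (E2 j (ltnW hji)) in hZj.
case: (lerP (psum Y i) (psum Y j)) => h.
  have : 0 <= (c - 1) * (psum Y j - psum Y i) by apply: mulr_ge0; lra.
  rewrite mulrBl mul1r => hh.
  move: hZj hh; set d := c * _; lra.
lra.
Qed.
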